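(* Let $G$ be a $\sigma$-compact locally compact Abelian group, $\Lambda\subset G$ a subset of a model set, and $F\subset G$ a finite nonempty set. Then $\Lambda+F$ is a subset of a model set.
   Context: A cut and project scheme $(G\times H,\widetilde L)$: $H$ a locally compact Abelian group, $\widetilde L\subset G\times H$ a discrete cocompact subgroup with $\pi_1|_{\widetilde L}$ injective and $\pi_2(\widetilde L)$ dense in $H$; $x^\star:=\pi_2((\pi_1|_{\widetilde L})^{-1}(x))$. A model set is $\Lambda(W):=\{x\in\pi_1(\widetilde L):x^\star\in W\}$ for some cut and project scheme and some precompact $W\subset H$ with nonempty interior. *)

(* Defs.v *)
From Stdlib Require Import List.
Set Implicit Arguments.

Definition subset {T : Type} (A B : T -> Prop) : Prop := forall x, A x -> B x.

Section Topology.
Variable T : Type.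
Variable O : (T -> Prop) -> Prop.

Definition is_topology : Prop :=
  O (fun _ => True) /\
  (forall Fam : (T -> Prop) -> Prop,
      (forall U, Fam U -> O U) -> O (fun x => exists U, Fam U /\ U x)) /\
  (forall U V, O U -> O V -> O (fun x => U x /\ V x)).

Definition hausdorff : Prop :=
  forall x y, x <> y -> exists U V, O U /\ O V /\ U x /\ V y /\
                        (forall z, U z -> V z -> False).

Definition compact (K : T -> Prop) : Prop :=
  forall Fam : (T -> Prop) -> Prop,
    (forall U, Fam U -> O U) ->
    (forall x, K x -> exists U, Fam U /\ U x) ->
    exists l : list (T -> Prop),
      (forall U, In U l -> Fam U) /\
      (forall x, K x -> exists U, In U l /\ U x).

Definition closure (A : T -> Prop) : T -> Prop :=
  fun x => forall U, O U -> U x -> exists y, U y /\ A y.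

Definition precompact (A : T -> Prop) : Prop := compact (closure A).

Definition nonempty_interior (A : T -> Prop) : Prop :=
  exists U, O U /\ (exists x, U x) /\ subset U A.

Definition dense (D : T -> Prop) : Prop :=
  forall U, O U -> (exists x, U x) -> exists y, U y /\ D y.

Definition locally_compact : Prop :=
  forall x, exists U K, O U /\ U x /\ subset U K /\ compact K.

Definition sigma_compact : Prop :=
  exists K : nat -> T -> Prop, (forall n, compact (K n)) /\ forall x, exists n, K n x.

End Topology.

Definition prod_open {A B : Type} (OA : (A -> Prop) -> Prop)
  (OB : (B -> Prop) -> Prop) (W : A * B -> Prop) : Prop :=
  forall p, W p -> exists U V, OA U /\ OB V /\ U (fst p) /\ V (snd p) /\
              (forall a b, U a -> V b -> W (a, b)).

Record TopAbGroup := {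
  carrier :> Type;
  zero : carrier;
  add : carrier -> carrier -> carrier;
  opp : carrier -> carrier;
  opens : (carrier -> Prop) -> Prop
}.

Arguments zero {_}.
Arguments add {_} _ _.
Arguments opp {_} _.
Arguments opens {_} _.

Definition is_LCA (G : TopAbGroup) : Prop :=
  (forall x y z : G, add x (add y z) = add (add x y) z) /\
  (forall x y : G, add x y = add y x) /\
  (forall x : G, add zero x = x) /\
  (forall x : G, add (opp x) x = zero) /\
  is_topology (@opens G) /\
  hausdorff (@opens G) /\
  (forall W, opens W -> prod_open (@opens G) (@opens G) (fun p => W (add (fst p) (snd p)))) /\
  (forall W, opens W -> opens (fun x : G => W (opp x))) /\
  locally_compact (@opens G).

Section CPS.
Variables G H : TopAbGroup.

Definition pair_add (p q : G * H) : G * H := (add (fst p) (fst q), add (snd p) (snd q)).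
Definition pair_opp (p : G * H) : G * H := (opp (fst p), opp (snd p)).
Definition GH_open : (G * H -> Prop) -> Prop := prod_open (@opens G) (@opens H).

Definition is_subgroup (L : G * H -> Prop) : Prop :=
  L (zero, zero) /\ (forall p q, L p -> L q -> L (pair_add p q)) /\
  (forall p, L p -> L (pair_opp p)).

Definition discrete_sub (L : G * H -> Prop) : Prop :=
  forall l, L l -> exists U, GH_open U /\ U l /\ (forall m, L m -> U m -> m = l).

(* (G x H)/L is compact for the quotient topology: the open sets of the
   quotient correspond to the L-saturated open sets of G x H. *)
Definition cocompact (L : G * H -> Prop) : Prop :=
  forall Fam : (G * H -> Prop) -> Prop,
    (forall U, Fam U -> GH_open U /\
                        (forall p l, U p -> L l -> U (pair_add p l))) ->
    (forall p, exists U, Fam U /\ U p) ->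
    exists l : list (G * H -> Prop),
      (forall U, In U l -> Fam U) /\ (forall p, exists U, In U l /\ U p).

Definition cut_and_project_scheme (L : G * H -> Prop) : Prop :=
  is_LCA H /\ is_subgroup L /\ discrete_sub L /\ cocompact L /\
  (forall p q, L p -> L q -> fst p = fst q -> p = q) /\
  dense (@opens H) (fun h => exists l, L l /\ snd l = h).

(* Lambda(W) = { x in pi1(L) : x^star in W }; since pi1 is injective on L,
   x^star is the second coordinate of the unique l in L with first coord x. *)
Definition model_set_of (L : G * H -> Prop) (W : H -> Prop) : G -> Prop :=
  fun x => exists l, L l /\ fst l = x /\ W (snd l).

End CPS.

Definition is_model_set (G : TopAbGroup) (M : G -> Prop) : Prop :=
  exists (H : TopAbGroup) (L : G * H -> Prop) (W : H -> Prop),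
    @cut_and_project_scheme G H L /\ precompact (@opens H) W /\
    nonempty_interior (@opens H) W /\ (forall x, M x <-> @model_set_of G H L W x).

Definition subset_of_model_set (G : TopAbGroup) (S : G -> Prop) : Prop :=
  exists M : G -> Prop, @is_model_set G M /\ subset S M.

Definition sumset (G : TopAbGroup) (A B : G -> Prop) : G -> Prop :=
  fun z => exists x y, A x /\ B y /\ z = add x y.

Definition finite_set {T : Type} (F : T -> Prop) : Prop :=
  exists l : list T, forall x, F x <-> In x l.

(* Main.v *)
Require Import Defs.
From Stdlib Require Import List ZArith Lia Classical FunctionalExtensionality PropExtensionality ProofIrrelevance.

Definition grp (T : TopAbGroup) : Prop :=
  (forall x y z : T, add x (add y z) = add (add x y) z) /\
  (forall x y : T, add x y = add y x) /\
  (forall x : T, add zero x = x) /\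
  (forall x : T, add (opp x) x = zero).
Lemma LCA_grp T : is_LCA T -> grp T.
Proof. intros (a&b&c&d&_). repeat split; auto. Qed.

Section Alg.
Context {T : TopAbGroup} (HT : grp T).
Set Default Proof Using "All".
Lemma Hassoc : forall x y z : T, add x (add y z) = add (add x y) z.
Proof. apply HT. Qed.
Lemma Hcomm : forall x y : T, add x y = add y x.
Proof. apply HT. Qed.
Lemma H0l : forall x : T, add zero x = x.
Proof. apply HT. Qed.
Lemma Hinvl : forall x : T, add (opp x) x = zero.
Proof. apply HT. Qed.

Lemma a0r (x : T) : add x zero = x.
Proof. rewrite Hcomm; first [apply H0l | apply Hinvl]. Qed.
Lemma ainvr (x : T) : add x (opp x) = zero.
Proof. rewrite Hcomm; first [apply H0l | apply Hinvl]. Qed.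
Lemma acancel (x y z : T) : add x y = add x z -> y = z.
Proof. intro E. rewrite <- (H0l y), <- (H0l z), <- (Hinvl x), <- !Hassoc, E. reflexivity. Qed.
Lemma ainv_uniq (x y : T) : add x y = zero -> y = opp x.
Proof. intro E. apply (acancel x). rewrite E, ainvr. reflexivity. Qed.
Lemma aopp_opp (x : T) : opp (opp x) = x.
Proof. symmetry. apply ainv_uniq. apply Hinvl. Qed.
Lemma aopp_add (x y : T) : opp (add x y) = add (opp x) (opp y).
Proof. symmetry. apply ainv_uniq.
  rewrite <- Hassoc, (Hcomm (opp x)), (Hassoc y), ainvr, H0l, ainvr. reflexivity. Qed.
Lemma aopp0 : opp (zero : T) = zero.
Proof. symmetry; apply ainv_uniq. apply H0l. Qed.
Lemma asubK (x y : T) : add (add x y) (opp y) = x.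
Proof. rewrite <- Hassoc, ainvr, a0r. reflexivity. Qed.
Lemma asubK' (x y : T) : add (add x (opp y)) y = x.
Proof. rewrite <- Hassoc, Hinvl, a0r. reflexivity. Qed.
Lemma aswap (x y z : T) : add (add x y) z = add (add x z) y.
Proof. rewrite <- !Hassoc, (Hcomm y). reflexivity. Qed.
Lemma a4 (a b c d : T) : add (add a b) (add c d) = add (add a c) (add b d).
Proof. rewrite !Hassoc, (aswap a b c). reflexivity. Qed.

Unset Default Proof Using.
Fixpoint natmul (n : nat) (x : T) : T :=
  match n with O => zero | S m => add (natmul m x) x end.
Definition zmul (z : Z) (x : T) : T :=
  match z with Z0 => zero | Zpos p => natmul (Pos.to_nat p) x
  | Zneg p => opp (natmul (Pos.to_nat p) x) end.

Set Default Proof Using "All".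
Lemma zmul_nat n x : zmul (Z.of_nat n) x = natmul n x.
Proof. destruct n. reflexivity. simpl. rewrite SuccNat2Pos.id_succ. reflexivity. Qed.
Lemma zmul_negnat n x : zmul (- Z.of_nat n) x = opp (natmul n x).
Proof. destruct n. simpl. now rewrite aopp0. simpl. rewrite SuccNat2Pos.id_succ. reflexivity. Qed.
Lemma Z_split (z : Z) : exists n, z = Z.of_nat n \/ z = (- Z.of_nat n)%Z.
Proof. exists (Z.abs_nat z). rewrite Nat2Z.inj_abs_nat. lia. Qed.

Lemma zmul_succ z x : zmul (z + 1) x = add (zmul z x) x.
Proof.
  destruct (Z_split z) as [n [-> | ->]].
  - replace (Z.of_nat n + 1)%Z with (Z.of_nat (S n)) by lia.
    rewrite !zmul_nat. reflexivity.
  - destruct n as [|m].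
    + simpl. rewrite H0l. reflexivity.
    + replace (- Z.of_nat (S m) + 1)%Z with (- Z.of_nat m)%Z by lia.
      rewrite !zmul_negnat. simpl. rewrite aopp_add, <- Hassoc, Hinvl, a0r. reflexivity.
Qed.
Lemma zmul_pred z x : zmul (z - 1) x = add (zmul z x) (opp x).
Proof. pose proof (zmul_succ (z-1) x) as E. replace (z - 1 + 1)%Z with z in E by lia.
  rewrite E, asubK. reflexivity. Qed.
Lemma zmul0 x : zmul 0 x = zero.
Proof. reflexivity. Qed.
Lemma zmul1 x : zmul 1 x = x.
Proof. simpl. apply H0l. Qed.
Lemma zmul_add a b x : zmul (a + b) x = add (zmul a x) (zmul b x).
Proof.
  induction b using Z.peano_ind.
  - rewrite Z.add_0_r, zmul0, a0r. reflexivity.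
  - rewrite <- !Z.add_1_r, Z.add_assoc, !zmul_succ, IHb, Hassoc. reflexivity.
  - rewrite <- !Z.sub_1_r, Z.add_sub_assoc, !zmul_pred, IHb, Hassoc. reflexivity.
Qed.
Lemma zmul_opp a x : zmul (- a) x = opp (zmul a x).
Proof. apply ainv_uniq. rewrite <- zmul_add. replace (a + - a)%Z with 0%Z by lia. reflexivity. Qed.
Lemma zmul_mul a b x : zmul (a * b) x = zmul a (zmul b x).
Proof.
  induction a using Z.peano_ind.
  - reflexivity.
  - rewrite <- Z.add_1_r, Z.mul_add_distr_r, zmul_add, zmul_succ, IHa, Z.mul_1_l. reflexivity.
  - rewrite <- Z.sub_1_r, Z.mul_sub_distr_r, Z.mul_1_l.
    replace (a * b - b)%Z with (a * b + - b)%Z by lia.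
    rewrite zmul_add, zmul_pred, IHa, zmul_opp. reflexivity.
Qed.
Lemma zmul_zero a : zmul a (zero : T) = zero.
Proof.
  induction a using Z.peano_ind.
  - reflexivity.
  - rewrite <- Z.add_1_r, zmul_succ, IHa, a0r. reflexivity.
  - rewrite <- Z.sub_1_r, zmul_pred, IHa, aopp0, a0r. reflexivity.
Qed.
End Alg.
Unset Default Proof Using.

Lemma ag_move {T : TopAbGroup} (HT : grp T) (a b c d : T) :
  add a b = add c d -> add b (opp d) = add c (opp a).
Proof.
  intros E.
  rewrite <- (H0l HT b), <- (Hinvl HT a), <- (Hassoc HT (opp a)), E.
  rewrite (Hcomm HT (opp a)), (aswap HT), asubK; auto.
Qed.

Lemma list_choice {A B : Type} (P : A -> Prop) (R : A -> B -> Prop) (l : list B) :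
  (forall V, In V l -> exists U, P U /\ R U V) ->
  exists l', (forall U, In U l' -> P U) /\ (forall V, In V l -> exists U, In U l' /\ R U V).
Proof.
  induction l as [|b l IH]; intros Hl.
  - exists nil. split; intros; simpl in *; tauto.
  - destruct IH as [l' [H1 H2]]. intros; apply Hl; simpl; auto.
    destruct (Hl b) as [U [HU1 HU2]]; simpl; auto.
    exists (U :: l'). split.
    + intros U' [<-|?]; auto.
    + intros V [<-|HV]. exists U; simpl; auto.
      destruct (H2 V HV) as [U0 [? ?]]. exists U0; simpl; auto.
Qed.

Lemma list_filter_ex {A : Type} (P : A -> Prop) (l : list A) :
  exists l', (forall U, In U l' -> P U) /\ (forall U, In U l -> P U -> In U l').
Proof.
  induction l as [|a l [l' [H1 H2]]].
  - exists nil; simpl; split; tauto.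
  - destruct (classic (P a)).
    + exists (a :: l'). split. intros U [<-|?]; auto. intros U [<-|?] ?; simpl; auto.
    + exists l'. split; auto. intros U [<-|?] ?; [tauto|auto].
Qed.

Section Top.
Variable T : Type.
Variable O : (T -> Prop) -> Prop.
Hypothesis HO : is_topology O.

Lemma open_ext (U V : T -> Prop) : O U -> (forall x, U x <-> V x) -> O V.
Proof. intros HU E. replace V with U; auto. apply functional_extensionality; intro x.
  apply propositional_extensionality; auto. Qed.

Lemma open_full : O (fun _ => True).
Proof. apply HO. Qed.

Lemma open_inter U V : O U -> O V -> O (fun x => U x /\ V x).
Proof. apply HO. Qed.

Lemma open_local (U : T -> Prop) :
  (forall x, U x -> exists V, O V /\ V x /\ (forall y, V y -> U y)) -> O U.
Proof.
  intros H. destruct HO as [_ [Hu _]].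
  apply open_ext with (fun x => exists V, (O V /\ forall y, V y -> U y) /\ V x).
  - apply Hu. tauto.
  - intro x; split.
    + intros [V [[_ HV] Vx]]; auto.
    + intros Ux. destruct (H x Ux) as [V [? [? ?]]]. exists V; auto.
Qed.

Lemma open_empty : O (fun _ => False).
Proof. apply open_local. tauto. Qed.

Lemma closure_compl_open (A : T -> Prop) : O (fun x => ~ closure O A x).
Proof.
  apply open_local. intros x Hx. unfold closure in Hx.
  apply not_all_ex_not in Hx as [U HU].
  apply imply_to_and in HU as [OU HU]. apply imply_to_and in HU as [Ux HU].
  exists U. refine (conj OU (conj Ux _)). intros y Uy Cy.
  apply HU. destruct (Cy U OU Uy) as [z [Uz Az]]. exists z; auto.
Qed.

Lemma closure_sub (A C : T -> Prop) : O (fun x => ~ C x) -> subset A C -> subset (closure O A) C.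
Proof.
  intros HC HAC x Hx. apply NNPP; intro nC.
  destruct (Hx _ HC nC) as [y [ny Ay]]. apply ny, HAC, Ay.
Qed.

Lemma compact_closed_sub (K C : T -> Prop) :
  compact O K -> O (fun x => ~ C x) -> subset C K -> compact O C.
Proof.
  intros HK HC HCK Fam HF Hcov.
  destruct (HK (fun U => Fam U \/ U = (fun x => ~ C x))) as [l [Hl1 Hl2]].
  - intros U [?| ->]; auto.
  - intros x Kx. destruct (classic (C x)) as [Cx|nCx].
    + destruct (Hcov x Cx) as [U [? ?]]; exists U; auto.
    + exists (fun x => ~ C x); auto.
  - destruct (list_filter_ex Fam l) as [l' [H1 H2]].
    exists l'. split; auto. intros x Cx.
    destruct (Hl2 x (HCK x Cx)) as [U [inU Ux]].
    exists U; split; auto. apply H2; auto.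
    destruct (Hl1 U inU) as [?| ->]; auto. contradiction.
Qed.

Lemma precompact_of (A K : T -> Prop) :
  compact O K -> subset (closure O A) K -> precompact O A.
Proof.
  intros HK Hs. unfold precompact. apply (compact_closed_sub K); auto.
  apply closure_compl_open.
Qed.

Lemma compact_union (K1 K2 : T -> Prop) :
  compact O K1 -> compact O K2 -> compact O (fun x => K1 x \/ K2 x).
Proof.
  intros H1 H2 Fam HF Hc.
  destruct (H1 Fam HF) as [l1 [A1 B1]]. intros x Kx; apply Hc; auto.
  destruct (H2 Fam HF) as [l2 [A2 B2]]. intros x Kx; apply Hc; auto.
  exists (l1 ++ l2). split.
  - intros U HU. apply in_app_or in HU as [?|?]; auto.
  - intros x [Kx|Kx].
    + destruct (B1 x Kx) as [U [? ?]]. exists U; split; auto. apply in_or_app; auto.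
    + destruct (B2 x Kx) as [U [? ?]]. exists U; split; auto. apply in_or_app; auto.
Qed.

Lemma compact_empty : compact O (fun _ => False).
Proof. intros Fam _ _. exists nil. simpl. split; tauto. Qed.

Lemma compact_ext (K1 K2 : T -> Prop) : compact O K1 -> (forall x, K1 x <-> K2 x) -> compact O K2.
Proof. intros H E. replace K2 with K1; auto. apply functional_extensionality; intro x.
  apply propositional_extensionality; auto. Qed.

Lemma compact_list_union {B : Type} (l : list B) (K : B -> T -> Prop) :
  (forall b, In b l -> compact O (K b)) -> compact O (fun x => exists b, In b l /\ K b x).
Proof.
  induction l as [|b l IH]; intros Hl.
  - apply compact_ext with (fun _ => False). apply compact_empty.
    intro x; split; [tauto|]. intros [b [[] _]].
  - apply compact_ext with (fun x => K b x \/ exists b', In b' l /\ K b' x).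
    + apply compact_union. apply Hl; simpl; auto. apply IH; intros; apply Hl; simpl; auto.
    + intro x; split.
      * intros [?|[b' [? ?]]]. exists b; simpl; auto. exists b'; simpl; auto.
      * intros [b' [[<-|?] ?]]; auto. right; exists b'; auto.
Qed.
End Top.

Lemma compact_image {A B : Type} (OA : (A -> Prop) -> Prop) (OB : (B -> Prop) -> Prop)
  (phi : A -> B) (Hphi : forall U, OB U -> OA (fun x => U (phi x))) (K : A -> Prop) :
  compact OA K -> compact OB (fun y => exists x, K x /\ y = phi x).
Proof.
  intros HK Fam HF Hc.
  destruct (HK (fun V => exists U, Fam U /\ V = (fun x => U (phi x)))) as [l [H1 H2]].
  - intros V [U [FU ->]]. apply Hphi, HF, FU.
  - intros x Kx. destruct (Hc (phi x)) as [U [FU Ux]]. exists x; auto.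
    exists (fun x => U (phi x)). split; auto. exists U; auto.
  - destruct (list_choice Fam (fun U V => V = (fun x => U (phi x))) l) as [l' [A1 A2]].
    + intros V HV. destruct (H1 V HV) as [U [? ?]]. exists U; auto.
    + exists l'. split; auto. intros y [x [Kx ->]].
      destruct (H2 x Kx) as [V [inV Vx]]. destruct (A2 V inV) as [U [inU ->]].
      exists U; auto.
Qed.

Lemma LCA_top T : is_LCA T -> is_topology (@opens T).
Proof. intros (_&_&_&_&h&_). exact h. Qed.
Lemma LCA_haus T : is_LCA T -> hausdorff (@opens T).
Proof. intros (_&_&_&_&_&h&_). exact h. Qed.
Lemma LCA_addc T : is_LCA T -> forall W, opens W -> prod_open (@opens T) (@opens T) (fun p => W (add (fst p) (snd p))).
Proof. intros (_&_&_&_&_&_&h&_). exact h. Qed.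
Lemma LCA_oppc T : is_LCA T -> forall W, opens W -> opens (fun x : T => W (opp x)).
Proof. intros (_&_&_&_&_&_&_&h&_). exact h. Qed.
Lemma LCA_lc T : is_LCA T -> locally_compact (@opens T).
Proof. intros (_&_&_&_&_&_&_&_&h). exact h. Qed.

Lemma trans_open T (HT : is_LCA T) (U : T -> Prop) (t : T) :
  opens U -> opens (fun x => U (add x t)).
Proof.
  intros HU. apply open_local. apply LCA_top; auto.
  intros x Ux. destruct (LCA_addc _ HT U HU (x, t) Ux) as [A [B [OA [OB [Ax [Bt Hab]]]]]].
  exists A. split; auto. split; auto. intros y Ay. apply (Hab y t); auto.
Qed.

Lemma const_open T (HT : is_LCA T) (P : Prop) : opens (fun _ : T => P).
Proof.
  destruct (classic P) as [p|np].
  - apply (open_ext _ _ (fun _ => True)). apply open_full, LCA_top; auto. tauto.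
  - apply (open_ext _ _ (fun _ => False)). apply open_empty, LCA_top; auto. tauto.
Qed.

Section Ext.
Variables G H : TopAbGroup.
Hypothesis HH : is_LCA H.
Variable c : Z.
Hypothesis Hc0 : (0 <= c)%Z.
Variable u : H.
Hypothesis Hu0 : c = 0%Z -> u = zero.

Let gH := LCA_grp H HH.

Record Hc := mkHc { hc : H; rc : Z; rc_ok : Z.modulo rc c = rc }.

Lemma Hc_eq (p q : Hc) : hc p = hc q -> rc p = rc q -> p = q.
Proof. destruct p, q; simpl; intros -> ->. f_equal. apply proof_irrelevance. Qed.

Definition nu (h : H) (n : Z) : Hc := mkHc (add h (zmul (n / c) u)) (n mod c) (Zmod_mod n c).

Lemma div_of_ok r : (r mod c = r -> r / c = 0)%Z.
Proof.
  intros E. destruct (Z.eq_dec c 0) as [->|nz]. apply Zdiv_0_r.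
  pose proof (Z.div_mod r c nz) as D. rewrite E in D.
  assert (c * (r / c) = 0)%Z as D2 by lia. apply Z.mul_eq_0 in D2. lia.
Qed.

Lemma nu_id p : nu (hc p) (rc p) = p.
Proof. apply Hc_eq; simpl. rewrite div_of_ok by apply rc_ok. rewrite zmul0, a0r; auto.
  apply rc_ok. Qed.

Lemma nu_add h1 n1 h2 n2 :
  nu (add (hc (nu h1 n1)) (hc (nu h2 n2))) (rc (nu h1 n1) + rc (nu h2 n2)) = nu (add h1 h2) (n1 + n2).
Proof.
  apply Hc_eq; simpl.
  - assert ((n1 + n2) / c = n1 / c + n2 / c + (n1 mod c + n2 mod c) / c)%Z as E.
    { destruct (Z.eq_dec c 0) as [->|nz]. rewrite !Zdiv_0_r. lia.
      pose proof (Z.div_mod n1 c nz). pose proof (Z.div_mod n2 c nz).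
      replace (n1 + n2)%Z with ((n1 / c + n2 / c) * c + (n1 mod c + n2 mod c))%Z at 1 by lia.
      rewrite Z_div_plus_full_l; auto. }
    rewrite E, !zmul_add by auto. rewrite (a4 gH h1). rewrite <- (Hassoc gH). reflexivity.
  - symmetry. apply Zplus_mod.
Qed.

Lemma nu_shift h n k : nu h (n + k * c) = nu (add h (zmul k u)) n.
Proof.
  apply Hc_eq; simpl.
  - destruct (Z.eq_dec c 0) as [E|nz].
    + rewrite (Hu0 E), !zmul_zero, !a0r; auto.
    + rewrite Z_div_plus_full by auto. rewrite zmul_add by auto.
      rewrite (Hassoc gH), (aswap gH h). reflexivity.
  - apply Z_mod_plus_full.
Qed.

Definition zeroH : Hc := mkHc zero 0 (Zmod_0_l c).
Definition addH (p q : Hc) : Hc := nu (add (hc p) (hc q)) (rc p + rc q).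
Definition oppH (p : Hc) : Hc := nu (opp (hc p)) (- rc p).
Definition opensH (S : Hc -> Prop) : Prop :=
  forall r (pf : Z.modulo r c = r), opens (fun h => S (mkHc h r pf)).

Lemma zero_nu : zeroH = nu zero 0.
Proof. apply Hc_eq; simpl. rewrite a0r; auto. now rewrite Zmod_0_l. Qed.

Lemma addH_nu h1 n1 h2 n2 : addH (nu h1 n1) (nu h2 n2) = nu (add h1 h2) (n1 + n2).
Proof. apply nu_add. Qed.

Lemma nu_ext h1 n1 h2 n2 : h1 = h2 -> n1 = n2 -> nu h1 n1 = nu h2 n2.
Proof. intros -> ->; reflexivity. Qed.

Lemma oppH_nu h n : oppH (nu h n) = nu (opp h) (- n).
Proof.
  assert (E : addH (nu h n) (nu (opp h) (-n)) = zeroH).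
  { rewrite addH_nu, zero_nu. apply nu_ext. apply ainvr; auto. lia. }
  assert (E2 : addH (oppH (nu h n)) (nu h n) = zeroH).
  { unfold oppH. rewrite <- (nu_id (nu h n)) at 3. rewrite addH_nu, zero_nu. apply nu_ext.
    apply Hinvl; auto. lia. }
  (* uniqueness of inverses via associativity *)
  transitivity (addH (oppH (nu h n)) (addH (nu h n) (nu (opp h) (-n)))).
  - rewrite E. rewrite <- (nu_id (oppH (nu h n))), zero_nu, addH_nu. apply nu_ext.
    rewrite a0r; auto. lia.
  - set (p := oppH (nu h n)). rewrite <- (nu_id p).
    rewrite !addH_nu.
    transitivity (addH (addH (nu (hc p) (rc p)) (nu h n)) (nu (opp h) (-n))).
    + rewrite !addH_nu. apply nu_ext. apply Hassoc; auto. lia.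
    + rewrite nu_id. unfold p. rewrite E2, zero_nu, addH_nu. apply nu_ext. apply H0l; auto. lia.
Qed.

Definition H' : TopAbGroup := @Build_TopAbGroup Hc zeroH addH oppH opensH.

Lemma H'_grp : grp H'.
Proof.
  repeat split; simpl.
  - intros x y z. rewrite <- (nu_id x), <- (nu_id y), <- (nu_id z).
    rewrite !addH_nu. apply nu_ext. apply Hassoc; auto. lia.
  - intros x y. rewrite <- (nu_id x), <- (nu_id y).
    rewrite !addH_nu. apply nu_ext. apply Hcomm; auto. lia.
  - intros x. rewrite <- (nu_id x), zero_nu, addH_nu. apply nu_ext. apply H0l; auto. lia.
  - intros x. rewrite <- (nu_id x), oppH_nu, zero_nu, addH_nu. apply nu_ext. apply Hinvl; auto. lia.
Qed.

Lemma slice_open (P : Z -> Prop) (V : H -> Prop) :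
  opens V -> opensH (fun z => P (rc z) /\ V (hc z)).
Proof. intros OV r pf. simpl. apply open_inter. apply LCA_top; auto. apply const_open; auto. auto. Qed.

Lemma opensH_top : is_topology opensH.
Proof.
  pose proof (LCA_top _ HH) as T.
  split; [|split].
  - intros r pf. apply open_full; auto.
  - intros Fam HF r pf.
    apply (open_ext _ _ (fun h => exists V, (exists U, Fam U /\ V = fun h => U (mkHc h r pf)) /\ V h)).
    + apply T. intros V [U [FU ->]]. apply HF; auto.
    + intro h; split.
      * intros [V [[U [FU ->]] HV]]. exists U; auto.
      * intros [U [FU HU]]. exists (fun h => U (mkHc h r pf)). split; auto. exists U; auto.
  - intros U V HU HV r pf. apply open_inter; auto.
Qed.

Lemma H'_LCA : is_LCA H'.
Proof.
  pose proof H'_grp as (g1&g2&g3&g4).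
  pose proof (LCA_top _ HH) as T.
  split; [auto|split; [auto|split; [auto|split; [auto|]]]].
  split; [apply opensH_top|split; [|split; [|split]]].
  -
    intros p q npq.
    destruct (Z.eq_dec (rc p) (rc q)) as [E|nE].
    + assert (hc p <> hc q) as nh. { intro E2. apply npq, Hc_eq; auto. }
      destruct (LCA_haus _ HH _ _ nh) as [U0 [V0 [? [? [? [? D]]]]]].
      exists (fun z => rc z = rc p /\ U0 (hc z)), (fun z => rc z = rc p /\ V0 (hc z)).
      split; [exact (slice_open (fun r => r = rc p) U0 H0)|split; [exact (slice_open (fun r => r = rc p) V0 H1)|]].
      split; [simpl; auto|split; [simpl; auto|]].
      intros z [_ ?] [_ ?]. eapply D; eauto.
    + exists (fun z => rc z = rc p /\ True), (fun z => rc z = rc q /\ True).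
      split; [exact (slice_open (fun r => r = rc p) _ (open_full _ _ T))|split; [exact (slice_open (fun r => r = rc q) _ (open_full _ _ T))|]].
      split; [simpl; auto|split; [simpl; auto|]].
      intros z [E1 _] [E2 _]. congruence.
  -
    intros W HW [p q] Wz. simpl in Wz.
    set (r := (rc p + rc q)%Z) in *.
    set (d := (r / c)%Z) in *.
    pose (S := fun h => W (mkHc h (r mod c) (Zmod_mod r c))).
    assert (OS : opens S) by apply HW.
    pose (S' := fun h => S (add h (zmul d u))).
    assert (OS' : opens S') by (apply trans_open; auto).
    destruct (LCA_addc _ HH S' OS' (hc p, hc q)) as [A0 [B0 [OA [OB [Ap [Bq Hab]]]]]].
    { exact Wz. }
    exists (fun z => rc z = rc p /\ A0 (hc z)), (fun z => rc z = rc q /\ B0 (hc z)).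
    split; [exact (slice_open (fun r => r = rc p) A0 OA)|split; [exact (slice_open (fun r => r = rc q) B0 OB)|]].
    split; [simpl; auto|split; [simpl; auto|]].
    intros a b [Ea Aa] [Eb Bb]. simpl. unfold addH. rewrite Ea, Eb. apply (Hab _ _ Aa Bb).
  -
    intros W HW r pf. simpl. unfold oppH. simpl.
    pose (S := fun h => W (mkHc h ((- r) mod c) (Zmod_mod (- r) c))).
    assert (OS : opens S) by apply HW.
    pose (S' := fun h => S (add h (zmul ((- r) / c) u))).
    assert (OS' : opens S') by (apply trans_open; auto).
    apply (LCA_oppc _ HH S' OS').
  -
    intros p. destruct (LCA_lc _ HH (hc p)) as [U0 [K0 [OU [Up [sUK CK]]]]].
    exists (fun z => rc z = rc p /\ U0 (hc z)),
           (fun z => exists h, K0 h /\ z = mkHc h (rc p) (rc_ok p)).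
    split; [exact (slice_open (fun r => r = rc p) U0 OU)|split; [split; auto|split]].
    + intros z [E Uz]. exists (hc z). split; auto. apply Hc_eq; simpl; auto.
    + apply compact_image with (OA := @opens H); [intros U' HU'; apply HU'|exact CK].
Qed.

End Ext.
Arguments hc {H c}. Arguments rc {H c}. Arguments rc_ok {H c}. Arguments mkHc {H c}.

Lemma L_zmul G H (gG : grp G) (gH : grp H) (L : G * H -> Prop) (HS : @is_subgroup G H L) x h k :
  L (x, h) -> L (zmul k x, zmul k h).
Proof.
  destruct HS as [L0 [La Lo]]. intros Lx.
  induction k using Z.peano_ind.
  - exact L0.
  - rewrite <- Z.add_1_r, !zmul_succ by auto. apply (La (_,_) (_,_) IHk Lx).
  - rewrite <- Z.sub_1_r, !zmul_pred by auto. apply (La (_,_) (_,_) IHk (Lo (_,_) Lx)).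
Qed.

Lemma Zmod_eq_k c a b : (0 <= c)%Z -> (a mod c = b mod c)%Z -> exists k, a = (b + k * c)%Z.
Proof.
  intros Hc E. destruct (Z.eq_dec c 0) as [->|nz].
  - rewrite !Zmod_0_r in E. exists 0%Z. lia.
  - exists (a / c - b / c)%Z. pose proof (Z.div_mod a c nz). pose proof (Z.div_mod b c nz). lia.
Qed.

Section CPSExt.
Variables G H : TopAbGroup.
Hypothesis HG : is_LCA G.
Variable L : G * H -> Prop.
Hypothesis HL : @cut_and_project_scheme G H L.
Variable f : G.
Variable c : Z.
Hypothesis Hc0 : (0 <= c)%Z.
Hypothesis Kc : forall n, (exists h, L (zmul n f, h)) <-> (c | n)%Z.
Variable u : H.
Hypothesis Hu : L (zmul c f, u).

Lemma HH : is_LCA H. Proof. apply HL. Qed.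
Lemma Lsub : @is_subgroup G H L. Proof. apply HL. Qed.
Lemma Linj : forall p q, L p -> L q -> fst p = fst q -> p = q. Proof. apply HL. Qed.
Let gG := LCA_grp G HG.
Let gH := LCA_grp H HH.

Lemma Hu0 : c = 0%Z -> u = zero.
Proof. intros E. subst c. assert (E2 : (zmul 0 f, u) = (zero, zero)).
  apply Linj; [exact Hu | exact (proj1 Lsub) | reflexivity]. injection E2 as E3. exact E3. Qed.

Definition HP : TopAbGroup := H' H c u.
Definition nuP (h : H) (n : Z) : HP := nu H c u h n.
Lemma addP a n b m : @add HP (nuP a n) (nuP b m) = nuP (add a b) (n + m).
Proof. exact (addH_nu H HH c Hc0 u Hu0 a n b m). Qed.
Lemma oppP a n : @opp HP (nuP a n) = nuP (opp a) (- n).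
Proof. exact (oppH_nu H HH c Hc0 u Hu0 a n). Qed.
Lemma zeroP : @zero HP = nuP zero 0.
Proof. exact (zero_nu H HH c u). Qed.
Lemma nu_idP (p : HP) : nuP (hc p) (rc p) = p.
Proof. exact (nu_id H HH c Hc0 u Hu0 p). Qed.
Lemma shiftP h n k : nuP h (n + k * c) = nuP (add h (zmul k u)) n.
Proof. exact (nu_shift H HH c u Hu0 h n k). Qed.
Lemma HP_LCA : is_LCA HP.
Proof. exact (H'_LCA H HH c Hc0 u Hu0). Qed.

Definition L' (p : G * HP) : Prop :=
  exists x hx n, L (x, hx) /\ fst p = add x (zmul n f) /\ snd p = nuP hx n.

Lemma L'_sub : @is_subgroup G HP L'.
Proof.
  destruct Lsub as [L0 [La Lo]].
  split; [|split].
  - exists zero, zero, 0%Z. split; auto. split; simpl. rewrite a0r; auto. apply zeroP.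
  - intros [p1 p2] [q1 q2] [x1 [h1 [n1 [Lx1 [E1 E2]]]]] [x2 [h2 [n2 [Lx2 [F1 F2]]]]].
    simpl in *. subst.
    exists (add x1 x2), (add h1 h2), (n1 + n2)%Z. split; [apply (La (_,_) (_,_) Lx1 Lx2)|].
    split; simpl.
    + rewrite zmul_add by auto. apply a4; auto.
    + apply addP.
  - intros [p1 p2] [x1 [h1 [n1 [Lx1 [E1 E2]]]]]. simpl in *. subst.
    exists (opp x1), (opp h1), (- n1)%Z. split; [apply (Lo (_,_) Lx1)|].
    split; simpl.
    + rewrite zmul_opp, aopp_add by auto. reflexivity.
    + apply oppP.
Qed.

Lemma L'_inj : forall p q, L' p -> L' q -> fst p = fst q -> p = q.
Proof.
  destruct Lsub as [L0 [La Lo]].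
  intros [p1 p2] [q1 q2] [x1 [h1 [n1 [Lx1 [E1 E2]]]]] [x2 [h2 [n2 [Lx2 [F1 F2]]]]] E.
  simpl in *. subst.
  pose proof (ag_move gG _ _ _ _ E) as M.
  assert (LM : L (add x2 (opp x1), add h2 (opp h1))) by apply (La (_,_) (_,_) Lx2 (Lo (_,_) Lx1)).
  assert (Ediff : zmul (n1 - n2) f = add x2 (opp x1)).
  { replace (n1 - n2)%Z with (n1 + - n2)%Z by lia. rewrite zmul_add, zmul_opp by auto. exact M. }
  destruct (proj1 (Kc (n1 - n2)%Z)) as [k Ek].
  { exists (add h2 (opp h1)). rewrite Ediff. exact LM. }
  assert (Lk : L (zmul k (zmul c f), zmul k u)) by (apply L_zmul; auto; apply Lsub).
  rewrite <- zmul_mul, <- Ek, Ediff in Lk by auto.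
  assert (Eh := Linj _ _ LM Lk eq_refl). injection Eh as Eh.
  f_equal; auto.
  replace n1 with (n2 + k * c)%Z by lia. rewrite shiftP. f_equal.
  rewrite <- Eh, (Hcomm gH h2), Hassoc, ainvr, H0l; auto.
Qed.

Lemma L'_disc : discrete_sub G HP L'.
Proof.
  destruct Lsub as [L0 [La Lo]].
  intros [g z] [x [hx [n [Lx [E1 E2]]]]]. simpl in *. subst g z.
  destruct (proj1 (proj2 (proj2 HL)) (x, hx) Lx) as [U [OU [Ux Iso]]].
  destruct (OU (x, hx) Ux) as [A [B [OA [OB [Ax [Bx Hab]]]]]]. simpl in *.
  pose (A' := fun g => A (add g (opp (zmul n f)))).
  pose (B0 := fun h => B (add h (opp (zmul (n / c) u)))).
  assert (OA' : opens A') by (apply trans_open; auto).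
  assert (OB0 : opens B0) by (apply trans_open; auto; apply HH).
  pose (B' := fun w : HP => (fun r => r = (n mod c)%Z) (rc w) /\ B0 (hc w)).
  assert (OB' : opens B') by exact (slice_open H HH c (fun r => r = (n mod c)%Z) B0 OB0).
  exists (fun q : G * HP => A' (fst q) /\ B' (snd q)). split; [|split].
  - intros q [Aq Bq]. exists A', B'. refine (conj OA' (conj OB' (conj Aq (conj Bq _)))).
    intros a b Aa Bb. split; auto.
  - split; unfold A', B', B0; simpl.
    + rewrite asubK; auto.
    + split; auto. rewrite asubK; auto.
  - intros [g w] [x' [hx' [n' [Lx' [F1 F2]]]]] [Ag Bw]. simpl in *. subst g w.
    unfold A', B', B0 in *. simpl in *. destruct Bw as [Er Bw].
    destruct (Zmod_eq_k c n' n Hc0 Er) as [k Ek].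
    assert (Lk : L (zmul k (zmul c f), zmul k u)) by (apply L_zmul; auto; apply Lsub).
    assert (L2 : L (add x' (zmul k (zmul c f)), add hx' (zmul k u))) by apply (La (_,_) (_,_) Lx' Lk).
    assert (EG : add x' (zmul n' f) = add (add x' (zmul k (zmul c f))) (zmul n f)).
    { rewrite Ek, zmul_add, zmul_mul by auto. rewrite <- (Hassoc gG), (Hcomm gG (zmul n f)). reflexivity. }
    assert (EH : nuP hx' n' = nuP (add hx' (zmul k u)) n) by (rewrite Ek; apply shiftP).
    assert (EH2 : add hx' (zmul (n' / c) u) = add (add hx' (zmul k u)) (zmul (n / c) u))
      by exact (f_equal (@hc H c) EH).
    rewrite EH2 in Bw. rewrite EG in Ag. rewrite EG, EH.
    assert (EU : (add x' (zmul k (zmul c f)), add hx' (zmul k u)) = (x, hx)).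
    { apply Iso; auto. apply Hab.
      - rewrite asubK in Ag; auto.
      - rewrite asubK in Bw; auto. }
    injection EU as -> ->. reflexivity.
Qed.

Lemma L'_coc : cocompact G HP L'.
Proof.
  destruct Lsub as [L0 [La Lo]].
  intros Fam HF Hcov.
  pose (Fam' := fun V : G * H -> Prop => exists U, Fam U /\ V = fun q => U (fst q, nuP (snd q) 0)).
  destruct (proj1 (proj2 (proj2 (proj2 HL))) Fam') as [l [Hl1 Hl2]].
  - intros V [U [FU ->]]. destruct (HF U FU) as [OU SU]. split.
    + intros q Uq. destruct (OU _ Uq) as [A [B [OA [OB [Aq [Bq Hab]]]]]].
      exists A, (fun h => B (nuP h 0)). split; auto. split.
      * exact (trans_open H HH (fun h => B (mkHc h (0 mod c) (Zmod_mod 0 c))) (zmul (0 / c) u) (OB _ _)).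
      * refine (conj Aq (conj Bq _)). intros a b Aa Bb. apply (Hab a (nuP b 0)); auto.
    + intros q l Uq Ll. change (U (add (fst q) (fst l), nuP (add (snd q) (snd l)) 0)).
      assert (E : (add (fst q) (fst l), nuP (add (snd q) (snd l)) 0) =
                  pair_add G HP (fst q, nuP (snd q) 0) (fst l, nuP (snd l) 0)).
      { unfold pair_add. cbn [fst snd]. rewrite addP. reflexivity. }
      rewrite E. apply SU; auto.
      exists (fst l), (snd l), 0%Z. split. destruct l; auto. split; simpl; auto.
      rewrite a0r; auto.
  - intros p. destruct (Hcov (fst p, nuP (snd p) 0)) as [U [FU Up]].
    exists (fun q => U (fst q, nuP (snd q) 0)). split; auto. exists U; auto.
  - destruct (list_choice Fam (fun U V => V = fun q => U (fst q, nuP (snd q) 0)) l) as [l' [A1 A2]].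
    + intros V HV. destruct (Hl1 V HV) as [U [? ?]]. exists U; auto.
    + exists l'. split; auto. intros [g z].
      destruct (Hl2 (add g (opp (zmul (rc z) f)), hc z)) as [V [inV Vq]].
      destruct (A2 V inV) as [U [inU ->]]. exists U. split; auto. simpl in Vq.
      destruct (HF U (A1 U inU)) as [_ SU].
      assert (E : (g, z) = pair_add G HP (add g (opp (zmul (rc z) f)), nuP (hc z) 0) (zmul (rc z) f, nuP zero (rc z))).
      { unfold pair_add; cbn [fst snd]. rewrite asubK', addP, a0r by auto. simpl. rewrite nu_idP. reflexivity. }
      rewrite E. apply SU; auto.
      exists zero, zero, (rc z). split; auto. split; simpl; auto. rewrite H0l; auto.
Qed.

Lemma L'_dense : dense (@opens HP) (fun h => exists l, L' l /\ snd l = h).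
Proof.
  intros S OS [p Sp]. destruct p as [hp rp okp].
  destruct (proj2 (proj2 (proj2 (proj2 (proj2 HL)))) (fun h => S (mkHc h rp okp)) (OS rp okp)) as [y [Sy [[lx ly] [Ll Ey]]]].
  { exists hp; auto. }
  simpl in Ey. subst ly.
  exists (mkHc y rp okp). split; auto.
  exists (add lx (zmul rp f), nuP y rp). split.
  - exists lx, y, rp. auto.
  - simpl. apply Hc_eq; simpl.
    + rewrite (div_of_ok H c Hc0 u Hu0 rp okp). simpl. rewrite a0r; auto.
    + exact okp.
Qed.

Lemma L'_cps : @cut_and_project_scheme G HP L'.
Proof.
  split; [apply HP_LCA|split; [apply L'_sub|split; [apply L'_disc|split; [apply L'_coc|split; [apply L'_inj|apply L'_dense]]]]].
Qed.

End CPSExt.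

Lemma nat_min (P : nat -> Prop) : (exists n, P n) -> exists n, P n /\ forall m, (m < n)%nat -> ~ P m.
Proof.
  intros [n Pn]. apply NNPP; intro C.
  assert (forall k, forall m, (m <= k)%nat -> ~ P m).
  { induction k; intros m Hm Pm.
    - apply C. exists m. split; auto. intros m' Hm'. lia.
    - apply C. exists m. split; auto. intros m' Hm' Pm'. apply (IHk m'); auto. lia. }
  apply (H n n); auto.
Qed.

Lemma Kc_exists G H (gG : grp G) (gH : grp H) (L : G * H -> Prop) (HS : @is_subgroup G H L) (f : G) :
  exists c, (0 <= c)%Z /\ forall n, (exists h, L (zmul n f, h)) <-> (c | n)%Z.
Proof.
  pose (K := fun n => exists h, L (zmul n f, h)).
  assert (Kadd : forall a b, K a -> K b -> K (a + b)%Z).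
  { intros a b [ha Ha] [hb Hb]. exists (add ha hb). rewrite zmul_add by auto.
    apply (proj1 (proj2 HS) (_,_) (_,_) Ha Hb). }
  assert (Kmul : forall k a, K a -> K (k * a)%Z).
  { intros k a [ha Ha]. exists (zmul k ha). rewrite zmul_mul by auto. apply L_zmul; auto. }
  assert (K0 : K 0%Z) by (exists zero; apply HS).
  destruct (classic (exists m : nat, K (Z.of_nat (S m)))) as [Ex|NEx].
  - destruct (nat_min _ Ex) as [m [Km Mm]].
    exists (Z.of_nat (S m)). split; [lia|]. intros n. split.
    + intros Kn. set (c := Z.of_nat (S m)) in *.
      assert (cnz : c <> 0%Z) by lia.
      assert (Kr : K (n mod c)%Z).
      { replace (n mod c)%Z with (n + (- (n / c)) * c)%Z.
        apply Kadd; auto. pose proof (Z.div_mod n c cnz). lia. }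
      apply Z.mod_divide; auto.
      pose proof (Z.mod_pos_bound n c ltac:(lia)).
      destruct (Z.eq_dec (n mod c) 0) as [E|nE]; auto. exfalso.
      apply (Mm (Z.to_nat (n mod c) - 1)%nat). unfold c in *. lia.
      replace (Z.of_nat (S (Z.to_nat (n mod c) - 1))) with (n mod c)%Z by lia. exact Kr.
    + intros [k ->]. apply Kmul. exact Km.
  - exists 0%Z. split; [lia|]. intros n. split.
    + intros Kn. destruct (Z.lt_trichotomy n 0) as [Hn|[Hn|Hn]].
      * exfalso. apply NEx. exists (Z.to_nat (- n) - 1)%nat.
        replace (Z.of_nat (S (Z.to_nat (- n) - 1))) with ((-1) * n)%Z by lia. apply Kmul; auto.
      * subst. apply Z.divide_refl.
      * exfalso. apply NEx. exists (Z.to_nat n - 1)%nat.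
        replace (Z.of_nat (S (Z.to_nat n - 1))) with n by lia. auto.
    + intros [k ->]. replace (k * 0)%Z with 0%Z by lia. exact K0.
Qed.

Lemma extend (G H : TopAbGroup) (HG : is_LCA G) (L : G * H -> Prop) (HL : @cut_and_project_scheme G H L)
  (W : H -> Prop) (HW : precompact (@opens H) W) (HWi : nonempty_interior (@opens H) W) (f : G) :
  exists (H2 : TopAbGroup) (L2 : G * H2 -> Prop) (W2 : H2 -> Prop),
    @cut_and_project_scheme G H2 L2 /\ precompact (@opens H2) W2 /\
    nonempty_interior (@opens H2) W2 /\
    (forall x, model_set_of G H L W x -> model_set_of G H2 L2 W2 x) /\
    (exists h, L2 (f, h)) /\ (forall g h, L (g, h) -> exists h', L2 (g, h')).
Proof.
  assert (HH : is_LCA H) by apply HL.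
  pose proof (LCA_grp G HG) as gG. pose proof (LCA_grp H HH) as gH.
  destruct (Kc_exists G H gG gH L (proj1 (proj2 HL)) f) as [c [Hc0 Kc]].
  destruct (proj2 (Kc c) (Z.divide_refl c)) as [u Hu].
  pose proof (L'_cps G H HG L HL f c Hc0 Kc u Hu) as HC.
  pose proof (HP_LCA G H L HL f c Hc0 Kc u Hu) as HPL.
  exists (HP H c u), (L' G H L f c u), (fun z => rc z = 0%Z /\ W (hc z)).
  split; auto. split; [|split; [|split; [|split]]].
  -
    apply (precompact_of _ _ (LCA_top _ HPL)) with
      (K := fun z => exists h, closure (@opens H) W h /\ z = mkHc h 0%Z (Zmod_0_l c)).
    + apply compact_image with (OA := @opens H). intros U' HU'. apply HU'. exact HW.
    + intros z Cz.
      assert (Rz : rc z = 0%Z).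
      { apply NNPP; intro nz.
        destruct (Cz (fun w => (fun r => r = rc z) (rc w) /\ (fun _ => True) (hc w))) as [w [[E1 _] [E2 _]]].
        - exact (slice_open H HH c (fun r => r = rc z) _ (open_full _ _ (LCA_top _ HH))).
        - simpl; auto.
        - congruence. }
      exists (hc z). split.
      * intros U OU Uz.
        destruct (Cz (fun w => (fun r => r = 0%Z) (rc w) /\ U (hc w))) as [w [[_ Uw] [_ Ww]]].
        -- exact (slice_open H HH c (fun r => r = 0%Z) U OU).
        -- simpl; auto.
        -- exists (hc w); auto.
      * apply Hc_eq; simpl; auto.
  -
    destruct HWi as [U [OU [[x Ux] sUW]]].
    exists (fun z => (fun r => r = 0%Z) (rc z) /\ U (hc z)). split.
    + exact (slice_open H HH c (fun r => r = 0%Z) U OU).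
    + split. exists (mkHc x 0%Z (Zmod_0_l c)). simpl; auto.
      intros z [E Uz]. split; auto.
  - intros x [[lx hx] [Ll [E Wl]]]. simpl in E. subst lx.
    exists (x, nuP H c u hx 0). split; [|split].
    + exists x, hx, 0%Z. split; auto. split; simpl; auto. rewrite a0r; auto.
    + reflexivity.
    + simpl. split. apply Zmod_0_l. rewrite a0r; auto.
  - exists (nuP H c u zero 1). exists zero, zero, 1%Z. split. apply (proj1 (proj2 HL)).
    split; simpl; auto. rewrite !H0l; auto.
  - intros g h Lgh. exists (nuP H c u h 0). exists g, h, 0%Z. split; auto.
    split; simpl; auto. rewrite a0r; auto.
Qed.

Lemma extend_list (G : TopAbGroup) (HG : is_LCA G) (Lam : G -> Prop)
  (HLam : subset_of_model_set G Lam) (lF : list G) :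
  exists (H : TopAbGroup) (L : G * H -> Prop) (W : H -> Prop),
    @cut_and_project_scheme G H L /\ precompact (@opens H) W /\
    nonempty_interior (@opens H) W /\ subset Lam (model_set_of G H L W) /\
    (forall f, In f lF -> exists h, L (f, h)).
Proof.
  induction lF as [|f lF IH].
  - destruct HLam as [M [[H [L [W [HC [HW [HWi HM]]]]]] sub]].
    exists H, L, W. split; auto. split; auto. split; auto. split.
    + intros x Lx. apply HM, sub, Lx.
    + intros f [].
  - destruct IH as [H [L [W [HC [HW [HWi [sub Hin]]]]]]].
    destruct (extend G H HG L HC W HW HWi f) as [H2 [L2 [W2 [HC2 [HW2 [HWi2 [Hms [Hf Hold]]]]]]]].
    exists H2, L2, W2. split; auto. split; auto. split; auto. split.
    + intros x Lx. apply Hms, sub, Lx.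
    + intros g [<-|Hg]; auto. destruct (Hin g Hg) as [h Lh]. apply (Hold _ _ Lh).
Qed.

Lemma not_closure_list (H : TopAbGroup) (HH : is_LCA H) (W : H -> Prop) (x : H) (hl : list H) :
  (forall t, In t hl -> ~ closure (@opens H) W (add x (opp t))) ->
  exists V, opens V /\ V x /\ forall y t, In t hl -> V y -> ~ W (add y (opp t)).
Proof.
  pose proof (LCA_top _ HH) as T.
  induction hl as [|t hl IH]; intros Hn.
  - exists (fun _ => True). refine (conj (open_full _ _ T) (conj I _)). intros y t [].
  - destruct IH as [V [OV [Vx HV]]]. intros t' Ht'. apply Hn; simpl; auto.
    assert (nc := Hn t (or_introl eq_refl)). unfold closure in nc.
    apply not_all_ex_not in nc as [U nc].
    apply imply_to_and in nc as [OU nc]. apply imply_to_and in nc as [Ux nc].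
    exists (fun y => V y /\ U (add y (opp t))). split; [|split].
    + apply open_inter; auto. apply trans_open; auto.
    + split; auto.
    + intros y t' [<-|Ht'] [Vy Uy] Wy.
      * apply nc. exists (add y (opp t)); auto.
      * apply (HV y t' Ht' Vy Wy).
Qed.

Lemma stepB (G H : TopAbGroup) (HG : is_LCA G) (L : G * H -> Prop) (HL : @cut_and_project_scheme G H L)
  (W : H -> Prop) (HW : precompact (@opens H) W) (HWi : nonempty_interior (@opens H) W)
  (Lam F : G -> Prop) (lF : list G) (HF : forall x, F x <-> In x lF) (HFne : exists f, F f)
  (sub : subset Lam (model_set_of G H L W)) (Hin : forall f, In f lF -> exists h, L (f, h)) :
  subset_of_model_set G (sumset G Lam F).
Proof.
  assert (HH : is_LCA H) by apply HL.
  pose proof (LCA_grp G HG) as gG. pose proof (LCA_grp H HH) as gH.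
  pose proof (LCA_top _ HH) as T.
  destruct (list_choice (fun _ : H => True) (fun t f => L (f, t)) lF) as [hl [_ Hhl]].
  { intros f Hf. destruct (Hin f Hf) as [h Lh]. exists h; auto. }
  pose (W2 := fun h => exists t, In t hl /\ W (add h (opp t))).
  exists (model_set_of G H L W2). split.
  - exists H, L, W2. split; auto. split; [|split; [|intros; tauto]].
    + apply (precompact_of _ _ T) with
        (K := fun h => exists t, In t hl /\ closure (@opens H) W (add h (opp t))).
      * apply compact_list_union. intros t _.
        apply compact_ext with (fun y => exists x, closure (@opens H) W x /\ y = add x t).
        -- apply compact_image with (OA := @opens H); auto.
           intros U OU. apply trans_open; auto.
        -- intro y; split.
           ++ intros [x [Cx ->]]. rewrite asubK; auto.
           ++ intros Cy. exists (add y (opp t)). split; auto. rewrite asubK'; auto.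
      * intros z Cz. apply NNPP; intro nK.
        destruct (not_closure_list H HH W z hl) as [V [OV [Vz HV]]].
        { intros t Ht Ct. apply nK. exists t; auto. }
        destruct (Cz V OV Vz) as [y [Vy [t [Ht Wy]]]].
        apply (HV y t Ht Vy Wy).
    + destruct HWi as [U [OU [[x Ux] sUW]]].
      destruct HFne as [f0 Ff0]. destruct (Hhl f0 (proj1 (HF f0) Ff0)) as [t0 [Ht0 _]].
      exists (fun h => U (add h (opp t0))). split; [apply trans_open; auto|split].
      * exists (add x t0). rewrite asubK; auto.
      * intros h Uh. exists t0. split; auto.
  - intros z [x [y [Lx [Fy ->]]]].
    destruct (sub x Lx) as [[lx hx] [Ll [E Wl]]]. simpl in E, Wl. subst lx.
    destruct (Hhl y (proj1 (HF y) Fy)) as [t [Ht Lt]].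
    exists (add x y, add hx t). split; [|split; auto].
    + apply (proj1 (proj2 (proj1 (proj2 HL))) (_,_) (_,_) Ll Lt).
    + exists t. split; auto. simpl. rewrite asubK; auto.
Qed.

Theorem proposition6p17 (G : TopAbGroup) (HG : is_LCA G)
  (Hsig : sigma_compact (@opens G))
  (Lam : G -> Prop) (F : G -> Prop)
  (HLam : @subset_of_model_set G Lam)
  (HFfin : finite_set F) (HFne : exists f, F f) :
  @subset_of_model_set G (@sumset G Lam F).
Proof.
  destruct HFfin as [lF HF].
  destruct (extend_list G HG Lam HLam lF) as [H [L [W [HC [HW [HWi [sub Hin]]]]]]].
  exact (stepB G H HG L HC W HW HWi Lam F lF HF HFne sub Hin).
Qed.
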